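(* Let $(Y_i)_{i\ge1}$ be i.i.d. random variables taking non-negative integer values, and suppose $\mathbb{E}[Y_i^c]\le1$ for some constant $c\ge0$. Let $M=\sup_{j\ge0}\prod_{1\le i\le j}Y_i$ (the empty product being $1$). Then for every $A>0$, \[ \mathbb{P}[M\ge A]\le A^{-c}. \] *)

(* Defs.v *)
From HB Require Import structures.
From mathcomp Require Import all_boot all_order all_algebra.
From mathcomp Require Import all_classical all_reals all_analysis.
Set Implicit Arguments. Unset Strict Implicit. Unset Printing Implicit Defensive.
Import Order.TTheory GRing.Theory Num.Theory.
Local Open Scope classical_set_scope.
Local Open Scope ring_scope.

Definition mutually_independent d (T : measurableType d) (R : realType)
    (P : probability T R) (X : nat -> T -> R) : Prop :=
  forall (s : seq nat) (B : nat -> set R), uniq s ->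
    (forall i, measurable (B i)) ->
    P (\bigcap_(i in [set i | i \in s]) (X i @^-1` B i)) =
    (\prod_(i <- s) P (X i @^-1` B i))%E.

Definition identically_distributed d (T : measurableType d) (R : realType)
    (P : probability T R) (X : nat -> T -> R) : Prop :=
  forall i (B : set R), measurable B -> P (X i @^-1` B) = P (X 0%N @^-1` B).

Definition sup_prod (R : realType) T (X : nat -> T -> R) (w : T) : \bar R :=
  ereal_sup [set (\prod_(i < j) X i w)%:E | j in [set: nat]].

(* Main.v *)
Require Import Defs.
From HB Require Import structures.
From mathcomp Require Import all_boot all_order all_algebra.
From mathcomp Require Import all_classical all_reals all_analysis.
From mathcomp Require Import zify ring.
Import measurable_realfun.
Set Implicit Arguments. Unset Strict Implicit. Unset Printing Implicit Defensive.
Import Order.TTheory GRing.Theory Num.Theory.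
Local Open Scope classical_set_scope.
Local Open Scope ring_scope.

Fixpoint tuples (K n : nat) : seq (seq nat) :=
  if n is n'.+1 then [seq k :: s | k <- iota 0 K.+1, s <- tuples K n'] else [:: [::]].

Definition good (R : realType) (A x : R) (s : seq nat) : bool :=
  has (fun j => A <= x * \prod_(i <- take j s) (i%:R : R)) (iota 0 (size s).+1).

Lemma good_cons (R : realType) (A x : R) k s :
  good A x (k :: s) = (A <= x) || good A (x * k%:R) s.
Proof.
rewrite /good /= big_nil mulr1 big_cons mulrA; congr (_ || (_ || _)).
rewrite (iotaDl 1 1) has_map; apply: eq_has => j /=; by rewrite big_cons mulrA.
Qed.

Lemma tuplesS K n : tuples K n.+1 = [seq k :: s | k <- iota 0 K.+1, s <- tuples K n].
Proof. by []. Qed.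

Lemma tuples_mass (R : realType) K n (q : nat -> R) :
  (forall k, 0 <= q k) -> \sum_(k <- iota 0 K.+1) q k <= 1 ->
  0 <= \sum_(s <- tuples K n) \prod_(k <- s) q k <= 1.
Proof.
move=> q0 q1; elim: n => [|n /andP[IH0 IH1]].
  by rewrite big_seq1 big_nil ler01 lexx.
rewrite tuplesS big_allpairs_dep /=.
under eq_bigr => k _ do under eq_bigr => s _ do rewrite big_cons.
under eq_bigr => k _ do rewrite -mulr_sumr.
rewrite -mulr_suml; apply/andP; split.
  by apply: mulr_ge0 => //; apply: sumr_ge0.
apply: (le_trans _ q1); rewrite -[X in _ <= X]mulr1.
apply: ler_wpM2l => //; exact: sumr_ge0.
Qed.

Lemma sum_filter_le (R : realType) (T : Type) (L : seq T) (P : pred T) (F : T -> R) :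
  (forall s, 0 <= F s) -> \sum_(s <- L | P s) F s <= \sum_(s <- L) F s.
Proof.
move=> F0; rewrite big_mkcond; apply: ler_sum => s _; by case: ifP.
Qed.

Lemma good_bound (R : realType) (A c : R) K (q : nat -> R) :
  0 < A -> 0 <= c -> (forall k, 0 <= q k) -> \sum_(k <- iota 0 K.+1) q k <= 1 ->
  \sum_(k <- iota 0 K.+1) q k * (k%:R `^ c) <= 1 ->
  forall n x, 0 <= x ->
  \sum_(s <- tuples K n | good A x s) \prod_(k <- s) q k <= x `^ c * (A `^ c)^-1.
Proof.
move=> A0 c0 q0 q1 qc.
have Ac : 0 < A `^ c by rewrite powR_gt0.
have key : forall x, 0 <= x -> A <= x -> 1 <= x `^ c * (A `^ c)^-1.
  move=> x x0 Ax; rewrite ler_pdivlMr // mul1r.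
  by apply: ge0_ler_powR => //; rewrite nnegrE ?(ltW A0).
have rhs0 : forall x, 0 <= x `^ c * (A `^ c)^-1.
  by move=> x; rewrite mulr_ge0 ?powR_ge0 // invr_ge0 ltW.
elim=> [|n IH] x x0.
  rewrite big_mkcond big_seq1 /good /= big_nil mulr1 orbF.
  by case: ifP => Ax; [rewrite big_nil; exact: key|].
have [Ax|Ax] := leP A x.
  apply: le_trans (key x x0 Ax).
  apply: le_trans (proj2 (andP (tuples_mass n.+1 q0 q1))).
  by apply: sum_filter_le => s; apply: prodr_ge0.
rewrite tuplesS big_mkcond big_allpairs_dep.
under eq_bigr => k _.
  under eq_bigr => s _ do rewrite good_cons (leNgt A x) Ax /= big_cons.
  rewrite -big_mkcond -mulr_sumr.
  over.
apply: le_trans (ler_sum _ (fun k _ => ler_wpM2l (q0 k) (IH (x * k%:R) _))) _.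
  by move=> k _; rewrite mulr_ge0.
rewrite (eq_bigr (fun k => (x `^ c / A `^ c) * (q k * k%:R `^ c))); last first.
  move=> k _; rewrite powRM ?ler0n //; ring.
rewrite -(mulr_sumr (iota 0 K.+1) xpredT _ (x `^ c / A `^ c)).
by rewrite -[X in _ <= X]mulr1 ler_wpM2l.
Qed.

Lemma tuples_uniq K n : uniq (tuples K n).
Proof.
elim: n => [|n IH] //; rewrite tuplesS allpairs_uniq ?iota_uniq //.
by move=> [k s] [k' s'] _ _ /= [-> ->].
Qed.

Lemma mem_tuples K n s :
  (s \in tuples K n) = (size s == n) && all (fun k => (k <= K)%N) s.
Proof.
elim: n s => [|n IH] s; first by case: s.
rewrite tuplesS; apply/allpairsP/idP.
  case=> [[k s']] /= [kin sin ->] /=.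
  move: kin sin; rewrite -[0%N :: iota 1 K]/(iota 0 K.+1) mem_iota IH add0n ltnS.
  by move=> /andP[_ ->] /andP[/eqP -> ->]; rewrite eqxx.
case: s => [|k s'] //= /andP[sz /andP[kK aS]].
exists (k, s'); split => //=; first by rewrite -[0%N :: iota 1 K]/(iota 0 K.+1) mem_iota add0n ltnS.
by rewrite IH -(eqn_add2r 1) !addn1 sz.
Qed.

Lemma in_bigsetU (T : Type) (X : eqType) (L : seq X) (E : X -> set T) w :
  (\big[setU/set0]_(s <- L) E s) w <-> exists s, s \in L /\ E s w.
Proof.
elim: L => [|a L IH]; first by rewrite big_nil; split => // -[s []].
rewrite big_cons; split.
  case=> [Ea|/IH [s [sL Es]]]; first by exists a; rewrite mem_head.
  by exists s; rewrite in_cons sL orbT.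
move=> [s []]; rewrite in_cons => /orP [/eqP -> Ea|sL Es]; first by left.
by right; apply/IH; exists s.
Qed.

Lemma mu_bigU d (T : measurableType d) (R : realType)
    (mu : {measure set T -> \bar R}) (X : eqType) (L : seq X) (E : X -> set T) :
  uniq L -> (forall s, s \in L -> measurable (E s)) ->
  (forall s t, s \in L -> t \in L -> s != t -> E s `&` E t = set0) ->
  mu (\big[setU/set0]_(s <- L) E s) = (\sum_(s <- L) mu (E s))%E.
Proof.
elim: L => [|a L IH] /=; first by rewrite !big_nil measure0.
move=> /andP[aL uL] mE dE; rewrite !big_cons measureU.
- congr (_ + _)%E; apply: IH => // [s sL|s t sL tL]; first by apply: mE; rewrite in_cons sL orbT.
  by apply: dE; rewrite in_cons ?sL ?tL orbT.
- by apply: mE; rewrite mem_head.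
- by rewrite big_seq; apply: bigsetU_measurable => s sL; apply: mE; rewrite in_cons sL orbT.
apply/seteqP; split => // w [Ea /in_bigsetU [s [sL Es]]].
have as_ : a != s by apply: contraNneq aL => ->.
have := dE a s (mem_head _ _) _ as_; rewrite in_cons sL orbT => /(_ isT).
by move/seteqP => [H _]; apply: (H w).
Qed.

Lemma minn_prod_le (K : nat) (f : nat -> nat) (l : seq nat) :
  (minn (\prod_(i <- l) f i) K <= \prod_(i <- l) minn (f i) K)%N.
Proof.
elim: l => [|a l IH]; first by rewrite !big_nil; lia.
rewrite !big_cons; set P := \prod_(i <- l) f i; set Q := \prod_(i <- l) minn (f i) K.
apply: (@leq_trans (minn (f a) K * minn P K)); last exact: leq_mul.
have [fa0|fa0] := posnP (f a); first by rewrite fa0 /=; lia.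
have [P0|P0] := posnP P; first by rewrite P0 muln0; lia.
have [faK|faK] := leqP K (f a).
  apply: (@leq_trans K); first exact: geq_minr.
  have [K0|Kp] := posnP K; first by rewrite K0.
  by rewrite leq_pmulr // leq_min P0 Kp.
have [PK|PK] := leqP K P.
  apply: (@leq_trans K); first exact: geq_minr.
  have [K0|Kp] := posnP K; first by rewrite K0.
  by rewrite leq_pmull // leq_min fa0 Kp.
exact: geq_minl.
Qed.

Theorem lemma4p1 (d : measure_display) (T : measurableType d) (R : realType)
    (P : probability T R) (Y : nat -> {RV P >-> R}) (c : R) :
  mutually_independent P (fun i => Y i : T -> R) ->
  identically_distributed P (fun i => Y i : T -> R) ->
  (forall i w, Y i w \in Num.nat) ->
  0 <= c ->
  (forall i, ('E_P[fun w => (Y i w `^ c)%R] <= 1)%E) ->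
  forall A : R, 0 < A ->
    (P [set w | (A%:E <= sup_prod (fun i => Y i : T -> R) w)%E]
       <= (A `^ (- c))%:E)%E.
Proof.
move=> indep iid Ynat c0 Ebound A A0.
pose K := (Num.truncn A).+1.
have AK : A < K%:R := truncnS_gt A.
pose a i w := Num.truncn (Y i w).
have Ya : forall i w, Y i w = (a i w)%:R by move=> i w; exact/esym/truncnK/Ynat.
pose yc i w := minn (a i w) K.
have ycK : forall i w, (yc i w <= K)%N by move=> i w; exact: geq_minr.
pose B k : set R := if (k < K)%N then [set k%:R] else [set` `[K%:R, +oo[%R].
have mB : forall k, measurable (B k).
  by move=> k; rewrite /B; case: ifP => _; [exact: measurable_set1|exact: measurable_itv].
have YB : forall i w k, (k <= K)%N -> (B k (Y i w) <-> yc i w = k).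
  move=> i w k kK; rewrite /B Ya /yc; case: ifP => kK' /=.
    split => [/eqP|H]; first by rewrite eqr_nat => /eqP H; lia.
    by apply/eqP; rewrite eqr_nat; apply/eqP; lia.
  rewrite in_itv /= andbT ler_nat; split => H; lia.
have iid' : forall i (Bs : set R), measurable Bs ->
    P (Y i @^-1` Bs) = P (Y 0%N @^-1` Bs) := iid.
pose ys n w := [seq yc i w | i <- iota 0 n].
pose E n s := [set w | ys n w = s].
have ys_tuples : forall n w, ys n w \in tuples K n.
  move=> n w; rewrite mem_tuples size_map size_iota eqxx /=.
  by apply/allP => k /mapP [i _ ->].
have Ebig : forall n s, s \in tuples K n ->
    E n s = \bigcap_(i in [set i | i \in iota 0 n]) (Y i @^-1` B (nth 0%N s i)).
  move=> n s; rewrite mem_tuples => /andP[/eqP sz /allP sK].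
  apply/seteqP; split => w.
    rewrite /E /= => <- i; rewrite /= mem_iota add0n => /andP[_ ilt].
    rewrite /preimage /= (nth_map 0%N) ?size_iota // nth_iota // add0n.
    exact/(YB _ _ _ (ycK i w)).
  move=> H; rewrite /E /=; apply: (@eq_from_nth _ 0%N); first by rewrite size_map size_iota sz.
  move=> i; rewrite size_map size_iota => ilt.
  rewrite (nth_map 0%N) ?size_iota // nth_iota // add0n.
  have hk : (nth 0%N s i <= K)%N by apply: sK; rewrite mem_nth // sz.
  by apply/(YB i w _ hk)/H; rewrite /= mem_iota add0n ilt.
have mE : forall n s, s \in tuples K n -> measurable (E n s).
  move=> n s sT; rewrite Ebig //; case: n sT => [|n] sT.
    have -> : [set i | i \in iota 0 0] = set0 by apply/seteqP; split => i.
    by rewrite bigcap_set0; exact: measurableT.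
  apply: bigcap_measurable; first by exists 0%N; rewrite /= in_cons eqxx.
  by move=> i _; exact: measurable_funPTI.
pose q k := fine (P (Y 0%N @^-1` B k)).
have hq : forall k, P (Y 0%N @^-1` B k) = (q k)%:E.
  by move=> k; rewrite fineK // fin_num_measure //; exact: measurable_funPTI.
have q0 : forall k, 0 <= q k by move=> k; apply: fine_ge0; exact: measure_ge0.
have hE : forall n s, s \in tuples K n -> P (E n s) = (\prod_(k <- s) q k)%:E.
  move=> n s sT; have := sT; rewrite mem_tuples => /andP[/eqP sz _].
  rewrite Ebig // (indep (iota 0 n) (fun i => B (nth 0%N s i))) ?iota_uniq //.
  rewrite /=. under eq_bigr => i _ do rewrite iid' ?hq //.
  by rewrite prodEFin [X in _ = X%:E](big_nth 0%N) sz /index_iota subn0.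
have mYB : forall k, measurable (Y 0%N @^-1` B k).
  by move=> k; exact: measurable_funPTI.
have q1 : \sum_(k <- iota 0 K.+1) q k <= 1.
  have := @mu_bigU _ _ _ P _ _ (fun k => Y 0%N @^-1` B k) (iota_uniq 0 K.+1) (fun k _ => mYB k).
  move=> /(_ _) Hmu; rewrite -lee_fin -sumEFin.
  under eq_bigr => k _ do rewrite -hq.
  rewrite -Hmu; first by apply: probability_le1; apply: bigsetU_measurable => k _.
  move=> k k' kin k'in kk'; apply/seteqP; split => // w [].
  move: kin k'in; rewrite !mem_iota !add0n !ltnS => /andP[_ kK] /andP[_ k'K].
  move=> /(YB _ _ _ kK) H1 /(YB _ _ _ k'K) H2.
  by move: kk'; rewrite -H1 -H2 eqxx.
have qc : \sum_(k <- iota 0 K.+1) q k * (k%:R `^ c) <= 1.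
  rewrite -lee_fin; apply: le_trans (Ebound 0%N); rewrite expectation.unlock.
  pose f : nat -> T -> \bar R := fun k w => ((k%:R `^ c) * \1_(Y 0%N @^-1` B k) w)%:E.
  have f0 : forall k w, setT w -> (0 <= f k w)%E.
    by move=> k w _; rewrite lee_fin mulr_ge0 ?powR_ge0 // indicE ler0n.
  have -> : (\sum_(k <- iota 0 K.+1) q k * k%:R `^ c)%:E = (\int[P]_w (\sum_(k <- iota 0 K.+1) f k w))%E.
    rewrite ge0_integral_sum //; last first.
      move=> k; apply/measurable_EFinP; apply: measurable_funM.
        exact: measurable_cst.
      exact: measurable_indic.
    rewrite -sumEFin; apply: eq_bigr => k _.
    rewrite /f; under eq_integral do rewrite EFinM.
    rewrite ge0_integralZl_EFin ?powR_ge0 //.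
    - by rewrite integral_indic // setIT mulrC EFinM -hq.
    - by apply/measurable_EFinP; exact: measurable_indic.
  apply: ge0_le_integral => //.
  - by move=> w _; apply: sume_ge0 => k _; exact: f0.
  - apply: emeasurable_sum => k; apply/measurable_EFinP; apply: measurable_funM.
      exact: measurable_cst.
    exact: measurable_indic.
  - apply/measurable_EFinP.
    exact: (measurableT_comp (measurable_powR c) (measurable_funPT (Y 0%N))).
  move=> w _; rewrite sumEFin lee_fin.
  have ywin : yc 0%N w \in iota 0 K.+1 by rewrite mem_iota add0n ltnS ycK.
  rewrite (bigD1_seq (yc 0%N w)) ?iota_uniq // big1_seq; last first.
    move=> k /andP[kne]; rewrite mem_iota add0n ltnS => /andP[_ kK].
    rewrite indicE; case: (boolP (w \in _)) => [|_]; last by rewrite mulr0.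
    by rewrite in_setE /preimage /= => /(YB _ _ _ kK) H; move: kne; rewrite -H eqxx.
  rewrite /= addr0 indicE mem_set ?mulr1; last exact/(YB _ _ _ (ycK 0%N w)).
  rewrite Ya; apply: ge0_ler_powR => //; rewrite ?nnegrE ?ler0n // ler_nat.
  exact: geq_minl.
pose G n := [set w | good A 1 (ys n w)].
have GU : forall n, G n = \big[setU/set0]_(s <- seq.filter (good A 1) (tuples K n)) E n s.
  move=> n; apply/seteqP; split => w.
    move=> Gw; apply/in_bigsetU; exists (ys n w); split => //.
    by rewrite mem_filter Gw ys_tuples.
  by move/in_bigsetU => [s [+ Es]]; rewrite mem_filter /G /= /E /= in Es *; rewrite Es => /andP[].
have mG : forall n, measurable (G n).
  move=> n; rewrite GU big_seq; apply: bigsetU_measurable => s.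
  by rewrite mem_filter => /andP[_ sT]; exact: mE.
have PG : forall n, (P (G n) <= (A `^ (- c))%:E)%E.
  move=> n; rewrite GU mu_bigU ?filter_uniq ?tuples_uniq //; first last.
  - by move=> s t _ _ st; apply/seteqP; split => // w [Es Et]; move: st; rewrite -Es -Et eqxx.
  - by move=> s; rewrite mem_filter => /andP[_]; exact: mE.
  rewrite big_filter big_seq_cond (eq_bigr (fun s => (\prod_(k <- s) q k)%:E)); last first.
    by move=> s /andP[sT _]; exact: hE.
  rewrite -big_seq_cond sumEFin lee_fin powRN.
  by have := good_bound A0 c0 q0 q1 qc n ler01; rewrite powR1 /= mul1r.
have Gch : forall n w, G n w <->
    exists2 j, (j <= n)%N & A <= \prod_(i <- iota 0 j) (yc i w)%:R.
  move=> n w; change (good A 1 (ys n w) <-> exists2 j, (j <= n)%N & A <= \prod_(i <- iota 0 j) (yc i w)%:R); rewrite /good /ys size_map size_iota; split.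
    move/seq.hasP => [j]; rewrite mem_iota add0n ltnS => /andP[_ jn].
    have mj : minn j n = j by apply/minn_idPl.
    by rewrite -map_take take_iota mj big_map mul1r => ?; exists j.
  move=> [j jn Hj]; apply/seq.hasP; exists j; first by rewrite mem_iota add0n ltnS jn.
  have mj : minn j n = j by apply/minn_idPl.
  by rewrite -map_take take_iota mj big_map mul1r.
have Gmono : {homo G : n m / (n <= m)%N >-> (n <= m)%O}.
  move=> n m nm; rewrite subsetEset => w /Gch [j jn Hj]; apply/Gch.
  by exists j => //; exact: leq_trans jn nm.
have prodY : forall j w, \prod_(i < j) Y i w = (\prod_(i <- iota 0 j) a i w)%:R.
  move=> j w; elim: j => [|j IH]; first by rewrite big_ord0 big_nil.
  have -> : iota 0 j.+1 = iota 0 j ++ [:: j] by rewrite -addn1 iotaD.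
  by rewrite big_ord_recr IH big_cat big_seq1 natrM -Ya.
have supex : forall w, (A%:E <= sup_prod (fun i => Y i : T -> R) w)%E ->
    exists j, A <= \prod_(i < j) Y i w.
  move=> w Hs; have [//|Hn] := pselect (exists j, A <= \prod_(i < j) Y i w).
  exfalso.
  have H' : forall j, \prod_(i < j) Y i w < A.
    by move=> j; rewrite ltNge; apply/negP => h; apply: Hn; exists j.
  pose N := Num.truncn A.
  have NA : N%:R <= A by rewrite truncn_le ltW.
  pose b : nat := if N%:R < A then N else N.-1.
  have bA : b%:R < A.
    rewrite /b; case: ifP => // /negbT; rewrite -leNgt => AN.
    have NA' : N%:R = A by apply/le_anti; rewrite AN NA.
    have N0 : (0 < N)%N by rewrite -(ltr0n R) NA'.
    by rewrite -NA' ltr_nat prednK.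
  have pb : forall j, \prod_(i < j) Y i w <= b%:R.
    move=> j; have := H' j; rewrite prodY; set p := (\prod_(i <- _) _)%N => pA.
    rewrite ler_nat /b; case: ifP => NltA.
      by rewrite truncn_ge_nat ?(ltW A0) // ltW.
    have NA' : N%:R = A by apply/le_anti; rewrite NA leNgt NltA.
    by rewrite -ltnS prednK -?ltr_nat ?NA' // (@leq_ltn_trans p) // -(ltr_nat R) NA'.
  have : (sup_prod (fun i => Y i : T -> R) w <= b%:R%:E)%E.
    apply: ge_ereal_sup => y [j _ <-]; rewrite lee_fin; exact: pb.
  move/(le_trans Hs); rewrite lee_fin => /(lt_le_trans bA); by rewrite ltxx.
have SU : [set w | (A%:E <= sup_prod (fun i => Y i : T -> R) w)%E] = \bigcup_n G n.
  apply/seteqP; split => w /=.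
    move=> /supex [j Hj]; exists j => //; apply/Gch; exists j => //.
    rewrite -natr_prod; apply: (le_trans _ (_ : (minn (\prod_(i <- iota 0 j) a i w) K)%:R <= _)).
      rewrite /minn; case: ifP => _; [by rewrite -prodY | exact: ltW].
    by rewrite ler_nat; exact: minn_prod_le.
  move=> [n _ /Gch [j _ Hj]].
  have H : A <= \prod_(i < j) Y i w.
    apply: le_trans Hj _; rewrite prodY -natr_prod ler_nat.
    by apply: leq_prod => i _; exact: geq_minl.
  rewrite /sup_prod; apply: (le_trans (y := (\prod_(i < j) Y i w)%:E)); first by rewrite lee_fin.
  by apply: ereal_sup_ubound; exists j.
rewrite SU.
have hc := nondecreasing_cvg_mu (mu := P) mG (bigcup_measurable (fun k _ => mG k)) Gmono.
rewrite -(cvg_lim _ hc) //; apply: lime_le; first by apply/cvg_ex; eexists; exact: hc.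
exact: nearW PG.
Qed.
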